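(* Let $(X,\mathrm{dist})$ be a metric space, $\Sigma$ a metric space, and $\{U_\sigma(t,\tau)\}_{\sigma\in\Sigma}$ a family of processes on $X$. If the family is uniformly asymptotically compact, then $A^\star_\Sigma$ is a compact uniformly attracting set.
   Context: A process on $X$ is a family of maps $U(t,\tau):X\to X$, indexed by reals $t\ge\tau$, with $U(\tau,\tau)=\mathrm{id}_X$ and $U(t,\tau)=U(t,s)U(s,\tau)$ for $t\ge s\ge\tau$; no continuity is assumed. For nonempty $B,C\subset X$, $\delta_X(B,C)=\sup_{x\in B}\inf_{\xi\in C}\mathrm{dist}(x,\xi)$. A set $K\subset X$ is uniformly attracting if for every bounded $C\subset X$, $\lim_{t-\tau\to\infty}\sup_{\sigma\in\Sigma}\delta_X(U_\sigma(t,\tau)C,K)=0$. The family is uniformly asymptotically compact if there exists a compact uniformly attracting set. $\mathfrak{C}_\Sigma$ is the collection of all sequences $y_n=U_{\sigma_n}(t_n,\tau_n)x_n$ with $x_n$ a bounded sequence in $X$, $\sigma_n\in\Sigma$, $t_n-\tau_n\to\infty$, and $A^\star_\Sigma=\{x\in X: y_n\to x$ along a subsequence, for some $y_n\in\mathfrak{C}_\Sigma\}$. *)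

(* Defs.v *)
From HB Require Import structures.
From mathcomp Require Import all_boot all_order all_algebra.
From mathcomp Require Import all_classical all_reals all_analysis.
Set Implicit Arguments. Unset Strict Implicit. Unset Printing Implicit Defensive.
Import Order.TTheory GRing.Theory Num.Theory.
Local Open Scope classical_set_scope.
Local Open Scope ring_scope.

Section Defs.
Context {R : realType}.

(** A process on X: U t tau : X -> X for t >= tau (values for t < tau are
    irrelevant), with U(tau,tau) = id and U(t,tau) = U(t,s) U(s,tau). *)
Definition is_process {X : Type} (U : R -> R -> X -> X) : Prop :=
  (forall tau : R, U tau tau = id) /\
  (forall t s tau : R, tau <= s -> s <= t -> U t tau = U t s \o U s tau).

Definition mbounded {X : metricType R} (C : set X) : Prop :=
  exists (x0 : X) (r : R), C `<=` [set y | mdist x0 y <= r].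

Definition dist_to_set {X : metricType R} (x : X) (C : set X) : \bar R :=
  ereal_inf [set (mdist x xi)%:E | xi in C].

Definition hdelta {X : metricType R} (B C : set X) : \bar R :=
  ereal_sup [set dist_to_set x C | x in B].

Definition unif_attracting {X : metricType R} {Sigma : Type}
  (U : Sigma -> R -> R -> X -> X) (K : set X) : Prop :=
  forall C : set X, mbounded C ->
  forall eps : R, 0 < eps ->
  exists T : R, forall t tau : R, tau <= t -> T <= t - tau ->
    (ereal_sup [set hdelta (U sigma t tau @` C) K | sigma in [set: Sigma]]
      <= eps%:E)%E.

Definition unif_asymp_compact {X : metricType R} {Sigma : Type}
  (U : Sigma -> R -> R -> X -> X) : Prop :=
  exists K : set X, compact K /\ unif_attracting U K.

Definition in_CSigma {X : metricType R} {Sigma : Type}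
  (U : Sigma -> R -> R -> X -> X) (y : nat -> X) : Prop :=
  exists (x : nat -> X) (sigma : nat -> Sigma) (t tau : nat -> R),
    mbounded (range x) /\
    (forall n, tau n <= t n) /\
    (fun n => t n - tau n) @ \oo --> +oo /\
    (forall n, y n = U (sigma n) (t n) (tau n) (x n)).

Definition Astar {X : metricType R} {Sigma : Type}
  (U : Sigma -> R -> R -> X -> X) : set X :=
  [set x | exists y : nat -> X, in_CSigma U y /\
     exists phi : nat -> nat, (forall n, (phi n < phi n.+1)%N) /\
       (y \o phi) @ \oo --> x].
End Defs.

(* Main.v *)
From HB Require Import structures.
From mathcomp Require Import all_boot all_order all_algebra.
From mathcomp Require Import all_classical all_reals all_analysis.
From mathcomp Require Import lra.
Require Import Defs.
Import Order.TTheory GRing.Theory Num.Theory.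
Local Open Scope classical_set_scope.
Local Open Scope ring_scope.

Section Helpers.
Context {R : realType} {X : metricType R}.

Lemma inv_lt_small (e : R) (n : nat) : 0 < e -> e^-1 <= n%:R -> n.+1%:R^-1 < e.
Proof.
move=> e0 hn; rewrite -[e]invrK ltf_pV2 ?posrE ?invr_gt0 ?ltr0n //.
by apply: (le_lt_trans hn); rewrite ltr_nat.
Qed.

Lemma ev_small (e : R) : 0 < e -> exists N : nat, forall n, (N <= n)%N -> n.+1%:R^-1 < e.
Proof.
move=> e0; have [N _ HN] := nbhs_infty_ger e^-1.
by exists N => n Nn; apply: inv_lt_small => //; apply: HN.
Qed.

Lemma extract (y : nat -> X) (p : X) :
  (forall e : R, 0 < e -> forall N, exists n, (N <= n)%N /\ mdist p (y n) < e) ->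
  exists phi : nat -> nat, (forall n, (phi n < phi n.+1)%N) /\ (y \o phi) @ \oo --> p.
Proof.
move=> H.
have /choice [g Hg] : forall Nm : nat * nat, exists n,
    (Nm.1 <= n)%N /\ mdist p (y n) < (Nm.2.+1%:R)^-1.
  by move=> [N m]; apply: H; rewrite invr_gt0 ltr0n.
pose phi := fix f m := match m with 0 => g (0%N, 0%N) | m'.+1 => g ((f m').+1, m'.+1) end.
exists phi; split.
  by move=> n; exact: (Hg ((phi n).+1, n.+1)).1.
apply/metricType_numDomainType.cvgrPdist_lt => e e0.
have [N HN] := ev_small _ e0.
exists N => // n /= Nn.
have hd : mdist p (y (phi n)) < n.+1%:R^-1.
  by case: n Nn => [|n] _ /=; [exact: (Hg (0%N,0%N)).2 | exact: (Hg (_, n.+1)).2].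
exact: (lt_trans hd (HN n Nn)).
Qed.

Lemma incr_ge (phi : nat -> nat) : (forall n, (phi n < phi n.+1)%N) -> forall n, (n <= phi n)%N.
Proof. by move=> h; elim=> // n IH; apply: leq_ltn_trans (h n). Qed.

Lemma seq_compact (K : set X) (k : nat -> X) : compact K -> (forall n, K (k n)) ->
  exists p, K p /\ exists phi : nat -> nat, (forall n, (phi n < phi n.+1)%N) /\ (k \o phi) @ \oo --> p.
Proof.
move=> cK Kk.
have FK : (k @ \oo) K by exists 0%N => // n _; exact: Kk.
have [p [Kp clp]] := cK (k @ \oo) _ FK.
exists p; split => //; apply: extract => e e0 N.
have FA : (k @ \oo) (k @` [set n | (N <= n)%N]).
  by exists N => // n /= Nn; exists n.
have [q [[n /= Nn <-] hb]] := clp _ _ FA (nbhsx_ballx p e e0).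
by exists n; split => //; rewrite ballEmdist in hb.
Qed.
Lemma cpt_bdd (K : set X) (x0 : X) : compact K ->
  exists r : R, forall y, K y -> mdist x0 y <= r.
Proof.
move=> cK; apply: contrapT => nb.
have H : forall n : nat, exists y, K y /\ n%:R < mdist x0 y.
  move=> n; apply: contrapT => hn; apply: nb; exists n%:R => y Ky.
  by rewrite leNgt; apply/negP => hy; apply: hn; exists y.
have [k Hk] := choice H.
have [p [Kp [phi [incr cv]]]] := seq_compact _ _ cK (fun n => (Hk n).1).
move/metricType_numDomainType.cvgrPdist_lt : cv => /(_ 1 ltr01) [N1 _ HN1].
have [N2 _ HN2] := nbhs_infty_ger (mdist x0 p + 1).
pose n := maxn N1 N2.
have h1 := HN1 n (leq_maxl _ _); have h2 := HN2 n (leq_maxr _ _).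
have h3 := (Hk (phi n)).2.
have h4 : (n%:R : R) <= (phi n)%:R by rewrite ler_nat; exact: incr_ge.
have h5 := metric_triangle x0 p (k (phi n)).
simpl in h1; lra.
Qed.
Lemma closure_dist (S : set X) (z : X) :
  (forall e : R, 0 < e -> exists k, S k /\ mdist z k < e) -> closure S z.
Proof.
move=> H B /nbhs_ballP [e e0 sB].
have [k [Sk hk]] := H e e0.
by exists k; split => //; apply: sB; rewrite ballEmdist.
Qed.

Lemma dist_closure (S : set X) (z : X) : closure S z ->
  forall e : R, 0 < e -> exists k, S k /\ mdist z k < e.
Proof.
move=> cl e e0; have [k [Sk hk]] := cl _ (nbhsx_ballx z e e0).
by exists k; split => //; rewrite ballEmdist in hk.
Qed.
End Helpers.

Section Main.
Context {R : realType} {X : metricType R} {Sigma : Type}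
  (U : Sigma -> R -> R -> X -> X).

Lemma attr_K (K : set X) : unif_attracting U K ->
  forall C, mbounded C -> forall e : R, 0 < e -> exists T : R, 0 <= T /\
  forall t tau, tau <= t -> T <= t - tau -> forall sigma x, C x ->
  exists k, K k /\ mdist (U sigma t tau x) k < e.
Proof.
move=> hK C hC e e0.
have e20 : 0 < e / 2 by rewrite divr_gt0.
have [T HT] := hK C hC (e / 2) e20.
exists (Num.max T 0); split; first by rewrite le_max lexx orbT.
move=> t tau tt hT sigma x Cx.
have hT' : T <= t - tau by apply: le_trans hT; rewrite le_max lexx.
have hs := HT t tau tt hT'.
have h1 : (dist_to_set (U sigma t tau x) K <= (e / 2)%:E)%E.
  apply: le_trans hs.
  apply: le_trans (ereal_sup_ubound _); last by exists sigma.
  by apply: ereal_sup_ubound; exists (U sigma t tau x) => //; exists x.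
have h2 : (dist_to_set (U sigma t tau x) K < e%:E)%E.
  apply: le_lt_trans h1 _; rewrite lte_fin; lra.
have [_ [k Kk <-] hk] := ereal_inf_lt h2.
by exists k; split => //; rewrite lte_fin in hk.
Qed.

Lemma attr_from (A : set X) :
  (forall C, mbounded C -> forall e : R, 0 < e -> exists T : R,
  forall t tau, tau <= t -> T <= t - tau -> forall sigma x, C x ->
  exists a, A a /\ mdist (U sigma t tau x) a <= e) -> unif_attracting U A.
Proof.
move=> H C hC e e0; have [T HT] := H C hC e e0.
exists T => t tau tt hT.
apply: ge_ereal_sup => _ [sigma _ <-].
apply: ge_ereal_sup => _ [y [x Cx <-] <-].
have [a [Aa ha]] := HT t tau tt hT sigma x Cx.
apply: le_trans (ereal_inf_lbound _) _; first by exists a.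
by rewrite lee_fin.
Qed.
Lemma csig_near_K (K : set X) : unif_attracting U K -> forall y, in_CSigma U y ->
  forall e : R, 0 < e -> exists N, forall n, (N <= n)%N -> exists k, K k /\ mdist (y n) k < e.
Proof.
move=> hK y [x [sigma [t [tau [hb [ht [hinf hy]]]]]]] e e0.
have [T [T0 HT]] := attr_K _ hK _ hb _ e0.
have [N _ HN] := (cvgryPge _).1 hinf T.
exists N => n Nn; rewrite hy; apply: HT => //; try exact: HN; try by exists n.
Qed.

Lemma Astar_sub_K (K : set X) : compact K -> unif_attracting U K -> Astar U `<=` K.
Proof.
move=> cK hK z [y [hy [phi [incr cv]]]].
apply: (compact_closed (@metric_hausdorff _ X) cK).
apply: closure_dist => e e0.
have e20 : 0 < e / 2 by rewrite divr_gt0.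
have [N1 HN1] := csig_near_K _ hK _ hy _ e20.
move/metricType_numDomainType.cvgrPdist_lt : cv => /(_ _ e20) [N2 _ HN2].
pose n := maxn N1 N2.
have [k [Kk hk]] := HN1 (phi n) (leq_trans (leq_maxl _ _) (incr_ge _ incr n)).
have h2 := HN2 n (leq_maxr _ _); simpl in h2.
exists k; split => //.
have h3 := metric_triangle z (y (phi n)) k; lra.
Qed.
Lemma closed_step (K : set X) : (forall s, is_process (U s)) -> unif_attracting U K ->
  forall (z a : X) (m : nat), Astar U a -> mdist z a < m.+1%:R^-1 ->
  exists q : X * Sigma * R * R, (exists k, K k /\ mdist q.1.1.1 k < 1) /\
    q.2 <= q.1.2 /\ m%:R <= q.1.2 - q.2 /\
    mdist z (U q.1.1.2 q.1.2 q.2 q.1.1.1) < 2 * m.+1%:R^-1.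
Proof.
move=> hp hK z a m [y [[x [sigma [t [tau [hb [ht [hinf hy]]]]]]] [phi [incr cv]]]] hza.
have [T [T0 HT]] := attr_K _ hK _ hb _ ltr01.
have [N1 _ HN1] := (cvgryPge _).1 hinf (T + m%:R).
have mpos : 0 < m.+1%:R^-1 :> R by rewrite invr_gt0 ltr0n.
move/metricType_numDomainType.cvgrPdist_lt : cv => /(_ _ mpos) [N2 _ HN2].
pose n := maxn N1 N2; pose j := phi n.
have hj1 : T + m%:R <= t j - tau j.
  exact: (HN1 j (leq_trans (leq_maxl _ _) (incr_ge _ incr n))).
have hj2 : mdist a (y j) < m.+1%:R^-1 by exact: (HN2 n (leq_maxr _ _)).
have m0 : 0 <= m%:R :> R by rewrite ler0n.
exists (U (sigma j) (tau j + T) (tau j) (x j), sigma j, t j, tau j + T); simpl; split.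
  by apply: HT; [lra | lra | exists j].
split; first lra.
split; first lra.
have E := (hp (sigma j)).2 (t j) (tau j + T) (tau j) ltac:(lra) ltac:(lra).
have -> : U (sigma j) (t j) (tau j + T) (U (sigma j) (tau j + T) (tau j) (x j)) =
  U (sigma j) (t j) (tau j) (x j) by rewrite E.
rewrite -hy.
have h3 := metric_triangle z a (y j).
move: hza hj2 h3; set r := m.+1%:R^-1 => hza hj2 h3; lra.
Qed.
Lemma Astar_closed (K : set X) : compact K -> (forall s, is_process (U s)) ->
  unif_attracting U K -> closed (Astar U).
Proof.
move=> cK hp hK z cl.
have H : forall m : nat, exists q : X * Sigma * R * R, (exists k, K k /\ mdist q.1.1.1 k < 1) /\
    q.2 <= q.1.2 /\ m%:R <= q.1.2 - q.2 /\
    mdist z (U q.1.1.2 q.1.2 q.2 q.1.1.1) < 2 * m.+1%:R^-1.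
  move=> m.
  have mpos : 0 < m.+1%:R^-1 :> R by rewrite invr_gt0 ltr0n.
  have [a [Aa ha]] := dist_closure _ _ cl _ mpos.
  exact: (closed_step _ hp hK _ _ _ Aa ha).
have [f Hf] := choice H.
exists (fun m => U (f m).1.1.2 (f m).1.2 (f m).2 (f m).1.1.1); split.
  exists (fun m => (f m).1.1.1), (fun m => (f m).1.1.2), (fun m => (f m).1.2), (fun m => (f m).2).
  split.
    pose x0 := (f 0%N).1.1.1.
    have [r Hr] := cpt_bdd _ x0 cK.
    exists x0, (r + 1) => _ [m _ <-] /=.
    case: (Hf m) => [[k [Kk hk]] _].
    have h1 := Hr k Kk; have h2 := metric_triangle x0 k (f m).1.1.1.
    rewrite (metric_sym k) in h2; lra.
  split; first by move=> m; case: (Hf m) => _ [].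
  split; last by [].
  apply/cvgryPge => A.
  have [N _ HN] := nbhs_infty_ger A.
  exists N => // m /= Nm; case: (Hf m) => _ [_ [hm _]].
  exact: le_trans (HN m Nm) hm.
exists id; split; first by [].
apply/metricType_numDomainType.cvgrPdist_lt => e e0.
have e20 : 0 < e / 2 by rewrite divr_gt0.
have [N HN] := ev_small _ e20.
exists N => // m /= Nm; case: (Hf m) => _ [_ [_ hm]].
have := HN m Nm; move: hm; set r := m.+1%:R^-1 => hm hr; lra.
Qed.
Lemma csig_of (F : nat -> Sigma * X * R * R) (C : set X) : mbounded C ->
  (forall m, C (F m).1.1.2) -> (forall m, (F m).2 <= (F m).1.2) ->
  (forall m, m%:R <= (F m).1.2 - (F m).2) ->
  in_CSigma U (fun m => U (F m).1.1.1 (F m).1.2 (F m).2 (F m).1.1.2).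
Proof.
move=> [x0 [r hsub]] hC ht hm.
exists (fun m => (F m).1.1.2), (fun m => (F m).1.1.1), (fun m => (F m).1.2), (fun m => (F m).2).
split; first by exists x0, r => _ [m _ <-]; apply: hsub; apply: hC.
split; first exact: ht.
split; last by [].
apply/cvgryPge => A.
have [N _ HN] := nbhs_infty_ger A.
exists N => // m /= Nm; exact: le_trans (HN m Nm) (hm m).
Qed.

Lemma Astar_attr (K : set X) : compact K -> unif_attracting U K ->
  unif_attracting U (Astar U).
Proof.
move=> cK hK; apply: attr_from => C hC e e0.
apply: contrapT => nT.
have H : forall n : nat, exists q : Sigma * X * R * R, C q.1.1.2 /\ q.2 <= q.1.2 /\
    n%:R <= q.1.2 - q.2 /\
    forall a, Astar U a -> e < mdist (U q.1.1.1 q.1.2 q.2 q.1.1.2) a.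
  move=> n; apply: contrapT => hn; apply: nT; exists n%:R => t tau h1 h2 sigma x Cx.
  apply: contrapT => ha; apply: hn; exists (sigma, x, t, tau); split => //.
  split => //; split => // a Aa; rewrite ltNge; apply/negP => hle.
  by apply: ha; exists a.
have [f Hf] := choice H.
pose y := fun n => U (f n).1.1.1 (f n).1.2 (f n).2 (f n).1.1.2.
have hy : in_CSigma U y.
  apply: (@csig_of f C hC) => m; by case: (Hf m) => [? [? [? ?]]].
have G : forall m : nat, exists p : nat * X, (m <= p.1)%N /\ K p.2 /\
    mdist (y p.1) p.2 < m.+1%:R^-1.
  move=> m.
  have mpos : 0 < m.+1%:R^-1 :> R by rewrite invr_gt0 ltr0n.
  have [N HN] := csig_near_K _ hK _ hy _ mpos.
  have [k [Kk hk]] := HN (maxn N m) (leq_maxl _ _).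
  by exists (maxn N m, k); split => //=; rewrite leq_maxr.
have [g Hg] := choice G.
pose w := fun m => y (g m).1.
have hw : in_CSigma U w.
  apply: (@csig_of (fun m => f (g m).1) C hC) => m.
  - by case: (Hf (g m).1) => [? [? [? ?]]].
  - by case: (Hf (g m).1) => [? [? [? ?]]].
  - case: (Hf (g m).1) => [_ [_ [hm _]]]; apply: le_trans hm.
    by rewrite ler_nat; case: (Hg m).
have [p [Kp [phi [incr cv]]]] := seq_compact _ (fun m => (g m).2) cK (fun m => (Hg m).2.1).
have cw : (w \o phi) @ \oo --> p.
  apply/metricType_numDomainType.cvgrPdist_lt => e' e'0.
  have e20 : 0 < e' / 2 by rewrite divr_gt0.
  move/metricType_numDomainType.cvgrPdist_lt : cv => /(_ _ e20) [N1 _ HN1].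
  have [N2 HN2] := ev_small _ e20.
  exists (maxn N1 N2) => // m /= hm.
  have h1 := HN1 m (leq_trans (leq_maxl _ _) hm); simpl in h1.
  have h2 := (Hg (phi m)).2.2.
  have h3 := HN2 (phi m) (leq_trans (leq_trans (leq_maxr _ _) hm) (incr_ge _ incr m)).
  have h4 := metric_triangle p (g (phi m)).2 (w (phi m)).
  rewrite (metric_sym (g (phi m)).2) in h4.
  rewrite /w in h4 *; move: h2 h3; set r := (phi m).+1%:R^-1 => h2 h3; lra.
have Ap : Astar U p by exists w; split => //; exists phi.
move/metricType_numDomainType.cvgrPdist_lt : cw => /(_ _ e0) [N _ HN].
have h1 := HN N (leqnn N); simpl in h1.
have h2 := (Hf (g (phi N)).1).2.2.2 p Ap.
rewrite metric_sym in h1.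
rewrite /w /y in h1; lra.
Qed.
End Main.

Theorem proposition2p11 (R : realType) (X : metricType R) (Sigma : metricType R)
  (U : Sigma -> R -> R -> X -> X) :
  (forall sigma : Sigma, is_process (U sigma)) ->
  unif_asymp_compact U ->
  compact (Astar U) /\ unif_attracting U (Astar U).
Proof.
move=> hp [K [cK hK]]; split.
  apply: (subclosed_compact _ cK).
    exact: (Astar_closed _ _ cK hp hK).
  exact: (Astar_sub_K _ _ cK hK).
exact: (Astar_attr _ _ cK hK).
Qed.
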